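(* Let $(X,\mu)$ be a standard Borel space with a non-atomic Borel probability measure, let $E_1,E_2,E_3$ be SP1 equivalence relations on $X$, and define $R_{ij},R_0,R_i,E_i^\circ,R_{ij}^\circ$ as in the context. Suppose $E_1\vee E_2\vee E_3$ is a triangle join over $R_{12},R_{23},R_{13}$, and let $R=R_1\vee R_2\vee R_3=R_{12}\vee R_{23}\vee R_{13}$. Then for each $i\in\{1,2,3\}$, $E_i\vee R$ is the free amalgamated join $E_i\ast_{R_i}R$ of $E_i$ and $R$ over $R_i$, and $E=E_1\vee E_2\vee E_3$ is the free amalgamated join over $R$ of the three relations $E_i\ast_{R_i}R$, $i=1,2,3$; that is, \[E=\ast_{R,\,i=1}^{3}\bigl(E_i\ast_{R_i}R\bigr).\]
   Context: An SP1 equivalence relation on a standard Borel space $X$ with a non-atomic Borel probability measure $\mu$ is an equivalence relation $R\subset X\times X$ that is Borel, has countable classes, and preserves $\mu$. $S\vee T$ (and $S_1\vee\cdots\vee S_m$) denotes the smallest SP equivalence relation containing the given relations. Free amalgamated join: let $S_1,\dots,S_m$ be SP1 relations with a common subrelation $T$. A sequence $x_1,\dots,x_n$ is reduced if each $(x_k,x_{k+1})$ belongs to some $S_a$, two successive pairs belong to distinct factors, for $n>2$ no pair belongs to $T$, and for $n=2$, $x_1\ne x_2$. $S_1\vee\cdots\vee S_m$ is the free amalgamated join of the $S_a$ over $T$ (written $\ast_T S_a$) if every reduced sequence has distinct endpoints (up to a set of measure zero). Setup: for SP1 relations $E_1,E_2,E_3$ on $X$ put $R_{ij}=R_{ji}=E_i\cap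 E_j$ ($i\ne j$), $R_0=E_1\cap E_2\cap E_3$, and for $\{i,j,k\}=\{1,2,3\}$: $R_i=R_{ij}\vee R_{ik}$, $E_i^{\circ}=E_i\setminus R_i$, $R_{ij}^{\circ}=R_{ij}\setminus R_0$. A sequence $x_1,\dots,x_n$ in $X$ is triangle-reduced if: (a) every consecutive pair lies in one of $E_1^\circ,E_2^\circ,E_3^\circ,R_{12}^\circ,R_{13}^\circ,R_{23}^\circ$ (its type); (b) if $(x_k,x_{k+1})\in E_l^\circ$ with $\{i,j,l\}=\{1,2,3\}$, each neighbouring pair (when it exists) lies in $E_i^\circ\sqcup E_j^\circ\sqcup R_{ij}^\circ$; (c) if $(x_k,x_{k+1})\in R_{ij}^\circ$ with $\{i,j,l\}=\{1,2,3\}$, each neighbouring pair (when it exists) lies in $E_l^\circ\sqcup R_{il}^\circ\sqcup R_{jl}^\circ$. It is proper of type I if its set of types contains one of $\{E_1^\circ,R_{23}^\circ\}$, $\{E_2^\circ,R_{13}^\circ\}$, $\{E_3^\circ,R_{12}^\circ\}$, $\{E_1^\circ,E_2^\circ\}$, $\{E_2^\circ,E_3^\circ\}$, $\{E_1^\circ,E_3^\circ\}$; proper of type II if its types include all of $R_{12}^\circ,R_{13}^\circ,R_{23}^\circ$ and none of the $E_i^\circ$. A loop is a sequence with $x_1=x_n$. $E_1\vee E_2\vee E_3$ is a triangle join over $R_{12},R_{23},R_{13}$ if every proper triangle-reduced sequence of type I has distinct endpoints and every proper triangle-reduced loop of type II is a concatenation of $R_i$-loops (closed subsequences whose consecutive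 pairs all lie in a single $R_i$). *)

(* Defs.v *)
From HB Require Import structures.
From mathcomp Require Import all_boot all_order all_algebra.
From mathcomp Require Import boolp classical_sets functions cardinality reals ereal.
From mathcomp Require Import measure lebesgue_measure probability.
Set Implicit Arguments.
Unset Strict Implicit.
Unset Printing Implicit Defensive.
Import Order.TTheory GRing.Theory Num.Theory.
Local Open Scope classical_set_scope.
Local Open Scope ring_scope.

(* Standard Borel space: Borel-isomorphic to a Borel subset of the reals
   (equivalent to the Polish-space definition by Kuratowski's theorem). *)
Definition standard_borel d (T : measurableType d) (R : realType) : Prop :=
  exists f : T -> R, measurable_fun setT f /\ injective f /\
    measurable (range f) /\ (forall A, measurable A -> measurable (f @` A)).

Definition nonatomic d (T : measurableType d) (R : realType)
  (mu : probability T R) : Prop :=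
  forall A : set T, measurable A -> (0 < mu A)%E ->
    exists B, [/\ measurable B, B `<=` A, (0 < mu B)%E & (mu B < mu A)%E].

Definition equivalence_rel T (E : set (T * T)) : Prop :=
  [/\ forall x, E (x, x),
      forall x y, E (x, y) -> E (y, x) &
      forall x y z, E (x, y) -> E (y, z) -> E (x, z)].

Definition measure_preserving_rel d (T : measurableType d) (R : realType)
  (mu : probability T R) (E : set (T * T)) : Prop :=
  forall (A : set T) (f : T -> T), measurable A -> measurable_fun A f ->
    set_inj A f -> (forall x, A x -> E (x, f x)) -> measurable (f @` A) ->
    mu (f @` A) = mu A.

Definition SP1 d (T : measurableType d) (R : realType)
  (mu : probability T R) (E : set (T * T)) : Prop :=
  [/\ equivalence_rel E, measurable E,
      (forall x, countable [set y | E (x, y)]) & measure_preserving_rel mu E].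

(* smallest equivalence relation containing S (it is automatically SP when
   S is a union of SP relations) *)
Definition gen_eq T (S : set (T * T)) : set (T * T) :=
  [set p | forall F : set (T * T), equivalence_rel F -> S `<=` F -> F p].

Definition join2 T (A B : set (T * T)) := gen_eq (A `|` B).
Definition joinI T (I : Type) (S : I -> set (T * T)) :=
  gen_eq [set p | exists i, S i p].

(* Sequences x_1..x_n are represented by x : nat -> T and n, points x 0 .. x (n-1). *)
Definition reduced T (m : nat) (S : 'I_m -> set (T * T)) (Tr : set (T * T))
  (n : nat) (x : nat -> T) : Prop :=
  (2 <= n)%N /\ exists a : nat -> 'I_m,
    [/\ forall k, (k.+1 < n)%N -> S (a k) (x k, x k.+1),
        forall k, (k.+2 < n)%N -> a k != a k.+1,
        (2 < n)%N -> forall k, (k.+1 < n)%N -> ~ Tr (x k, x k.+1) &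
        n = 2%N -> x 0%N <> x 1%N].

Definition free_amalg d (T : measurableType d) (R : realType)
  (mu : probability T R) (m : nat) (S : 'I_m -> set (T * T))
  (Tr : set (T * T)) : Prop :=
  (forall a, Tr `<=` S a) /\
  exists N : set T, [/\ measurable N, mu N = 0%E &
    forall n x, ~ N (x 0%N) -> reduced S Tr n x -> x 0%N <> x n.-1].

(* The triangle setup; indices 0,1,2 stand for 1,2,3 *)
Section Tri.
Context (T : Type) (E : 'I_3 -> set (T * T)).
Definition Rij (i j : 'I_3) := E i `&` E j.
Definition R0 := E 0 `&` E 1 `&` E 2.
Definition Ri (i : 'I_3) := gen_eq [set p | exists j, j != i /\ Rij i j p].
Definition Eo (i : 'I_3) := E i `\` Ri i.
Definition Rijo (i j : 'I_3) := Rij i j `\` R0.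
Definition Rall := gen_eq [set p | exists i j, i != j /\ Rij i j p].
End Tri.

(* TE l = E_l^o ;  TR l = R_ij^o with {i,j,l} = {1,2,3} *)
Inductive ttype := TE of 'I_3 | TR of 'I_3.

Definition typrel T (E : 'I_3 -> set (T * T)) (t : ttype) : set (T * T) :=
  match t with
  | TE l => Eo E l
  | TR l => [set p | exists i j, [/\ i != l, j != l, i != j & Rijo E i j p]]
  end.

Definition compat (t t' : ttype) : Prop :=
  match t with
  | TE l => (exists i, i != l /\ t' = TE i) \/ t' = TR l
  | TR l => t' = TE l \/ (exists i, i != l /\ t' = TR i)
  end.

Definition tri_reduced T (E : 'I_3 -> set (T * T)) (n : nat) (x : nat -> T)
  (t : nat -> ttype) : Prop :=
  [/\ (2 <= n)%N,
      forall k, (k.+1 < n)%N -> typrel E (t k) (x k, x k.+1) &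
      forall k, (k.+2 < n)%N -> compat (t k) (t k.+1) /\ compat (t k.+1) (t k)].

Definition has_type (n : nat) (t : nat -> ttype) (tt : ttype) : Prop :=
  exists k, (k.+1 < n)%N /\ t k = tt.

Definition proper_I n t : Prop :=
  (exists l, has_type n t (TE l) /\ has_type n t (TR l)) \/
  (exists i j, i != j /\ has_type n t (TE i) /\ has_type n t (TE j)).

Definition proper_II n t : Prop :=
  (forall l, has_type n t (TR l)) /\ (forall l, ~ has_type n t (TE l)).

Definition concat_Ri_loops T (E : 'I_3 -> set (T * T)) (n : nat)
  (x : nat -> T) : Prop :=
  exists (r : nat) (c : nat -> nat),
    [/\ c 0%N = 0%N, c r = n.-1,
        forall j, (j < r)%N -> (c j < c j.+1)%N &
        forall j, (j < r)%N -> x (c j) = x (c j.+1) /\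
          exists i, forall k, (c j <= k)%N -> (k < c j.+1)%N ->
            Ri E i (x k, x k.+1)].

Definition triangle_join d (T : measurableType d) (R : realType)
  (mu : probability T R) (E : 'I_3 -> set (T * T)) : Prop :=
  (exists N : set T, [/\ measurable N, mu N = 0%E &
     forall n x t, ~ N (x 0%N) -> tri_reduced E n x t -> proper_I n t ->
       x 0%N <> x n.-1]) /\
  (exists N : set T, [/\ measurable N, mu N = 0%E &
     forall n x t, ~ N (x 0%N) -> tri_reduced E n x t -> x 0%N = x n.-1 ->
       proper_II n t -> concat_Ri_loops E n x]).

(* Main.v *)
Require Import Defs.
From HB Require Import structures.
From mathcomp Require Import all_boot all_order all_algebra.
From mathcomp Require Import boolp classical_sets functions cardinality reals ereal.
From mathcomp Require Import measure lebesgue_measure probability.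
From mathcomp Require Import zify.
Local Open Scope classical_set_scope.
Set Implicit Arguments.
Unset Strict Implicit.
Unset Printing Implicit Defensive.

Lemma I3_cases (i : 'I_3) : i = 0%R \/ i = 1%R \/ i = 2%R.
Proof.
case: i => [[|[|[|n]]] Hn]; [left|right;left|right;right|]; try by apply: val_inj.
by [].
Qed.

Lemma third (i j : 'I_3) : exists k, k != i /\ k != j.
Proof.
by case: (I3_cases i) => [->|[->|->]]; case: (I3_cases j) => [->|[->|->]];
 [exists 1%R|exists 2%R|exists 1%R|exists 2%R|exists 0%R|exists 0%R|exists 1%R|exists 0%R|exists 0%R].
Qed.

Lemma uniq3 (i j m l : 'I_3) : i != m -> j != m -> i != j -> l != m -> l = i \/ l = j.
Proof.
by case: (I3_cases i) => [->|[->|->]]; case: (I3_cases j) => [->|[->|->]];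
case: (I3_cases m) => [->|[->|->]]; case: (I3_cases l) => [->|[->|->]]; auto.
Qed.

Section Gen.
Variable T : Type.

Lemma gen_eq_equiv (S : set (T * T)) : Defs.equivalence_rel (Defs.gen_eq S).
Proof.
split.
- by move=> x F [r _ _] _; apply: r.
- by move=> x y H F HF sub; case: (HF) => _ s _; apply: s; apply: H.
- by move=> x y z H1 H2 F HF sub; case: (HF) => _ _ t; apply: t (H1 F HF sub) (H2 F HF sub).
Qed.

Lemma gen_eq_sub (S : set (T * T)) : S `<=` Defs.gen_eq S.
Proof. by move=> p Sp F _ sub; apply: sub. Qed.

Lemma gen_eq_min (S F : set (T * T)) : Defs.equivalence_rel F -> S `<=` F -> Defs.gen_eq S `<=` F.
Proof. by move=> HF sub p H; apply: H. Qed.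

Lemma gen_refl (S : set (T * T)) x : Defs.gen_eq S (x, x).
Proof. by case: (gen_eq_equiv S) => r _ _; apply: r. Qed.
Lemma gen_sym (S : set (T * T)) x y : Defs.gen_eq S (x, y) -> Defs.gen_eq S (y, x).
Proof. by case: (gen_eq_equiv S) => _ s _; apply: s. Qed.
Lemma gen_trans (S : set (T * T)) x y z : Defs.gen_eq S (x, y) -> Defs.gen_eq S (y, z) -> Defs.gen_eq S (x, z).
Proof. by case: (gen_eq_equiv S) => _ _ t; apply: t. Qed.

Inductive closR (S : set (T * T)) (x : T) : T -> Prop :=
| cr0 : closR S x x
| cr1 y z : closR S x y -> S (y, z) -> closR S x z.

Lemma closR_trans S x y z : closR S x y -> closR S y z -> closR S x z.
Proof. move=> H1 H2; elim: H2 => // a b _ IH Sab; exact: cr1 IH Sab. Qed.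

Lemma closR_cons S x y z : S (x, y) -> closR S y z -> closR S x z.
Proof. move=> Sxy H; apply: closR_trans H; apply: cr1 Sxy; exact: cr0. Qed.

Lemma gen_closR (S : set (T * T)) : (forall x y, S (x, y) -> S (y, x)) ->
  forall x y, Defs.gen_eq S (x, y) -> closR S x y.
Proof.
move=> Ssym x y H.
have : Defs.gen_eq S `<=` [set p | closR S p.1 p.2]; last by move/(_ (x, y) H).
apply: gen_eq_min; last by move=> [a b] Sab /=; apply: cr1 Sab; exact: cr0.
split => /=.
- by move=> a; exact: cr0.
- move=> a b H1; elim: H1 => [|c d _ IH Scd]; first exact: cr0.
  exact: closR_cons (Ssym _ _ Scd) IH.
- by move=> a b c; apply: closR_trans.
Qed.

End Gen.

Section Comb.
Variable T : Type.
Variable E : 'I_3 -> set (T * T).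
Hypothesis HE : forall i, Defs.equivalence_rel (E i).

Lemma Erefl i x : E i (x, x). Proof. by case: (HE i). Qed.
Lemma Esym i x y : E i (x, y) -> E i (y, x). Proof. by case: (HE i) => _ s _; apply: s. Qed.
Lemma Etrans i x y z : E i (x, y) -> E i (y, z) -> E i (x, z).
Proof. by case: (HE i) => _ _ t; apply: t. Qed.

Lemma R0_all p : R0 E p <-> forall i, E i p.
Proof.
split; last by move=> H; split; [split|]; apply: H.
by case=> [[h0 h1] h2] i; case: (I3_cases i) => [->|[->|->]].
Qed.

Lemma R0_Rij i j p : R0 E p -> Rij E i j p.
Proof. by move/R0_all=> H; split; apply: H. Qed.

Lemma Rij_trans i j x y z : Rij E i j (x, y) -> Rij E i j (y, z) -> Rij E i j (x, z).
Proof. by case=> [h1 h2] [h3 h4]; split; [apply: Etrans h1 h3|apply: Etrans h2 h4]. Qed.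
Lemma Rij_sym i j x y : Rij E i j (x, y) -> Rij E i j (y, x).
Proof. by case=> [h1 h2]; split; apply: Esym. Qed.
Lemma Rij_C i j p : Rij E i j p -> Rij E j i p.
Proof. by case. Qed.
Lemma R0_trans x y z : R0 E (x, y) -> R0 E (y, z) -> R0 E (x, z).
Proof. by move=> /R0_all h1 /R0_all h2; apply/R0_all => i; apply: Etrans (h1 i) (h2 i). Qed.
Lemma R0_refl x : R0 E (x, x).
Proof. by apply/R0_all => i; apply: Erefl. Qed.

Definition Grel := [set p : T * T | exists i j, i != j /\ Rij E i j p].

Lemma Grel_sym x y : Grel (x, y) -> Grel (y, x).
Proof. by case=> i [j [ij H]]; exists i, j; split => //; apply: Rij_sym. Qed.

Lemma Rall_refl x : Rall E (x, x). Proof. exact: gen_refl. Qed.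
Lemma Rall_sym x y : Rall E (x, y) -> Rall E (y, x). Proof. exact: gen_sym. Qed.
Lemma Rall_trans x y z : Rall E (x, y) -> Rall E (y, z) -> Rall E (x, z).
Proof. exact: gen_trans. Qed.
Lemma Ri_refl l x : Ri E l (x, x). Proof. exact: gen_refl. Qed.
Lemma Ri_sym l x y : Ri E l (x, y) -> Ri E l (y, x). Proof. exact: gen_sym. Qed.
Lemma Ri_trans l x y z : Ri E l (x, y) -> Ri E l (y, z) -> Ri E l (x, z).
Proof. exact: gen_trans. Qed.

Lemma Grel_Rall p : Grel p -> Rall E p.
Proof. exact: gen_eq_sub. Qed.

Lemma Ri_E l : Ri E l `<=` E l.
Proof.
apply: gen_eq_min; first exact: HE.
by move=> p [j [_ [h _]]].
Qed.

Lemma Ri_Rall l : Ri E l `<=` Rall E.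
Proof.
apply: gen_eq_min; first exact: gen_eq_equiv.
by move=> p [j [jl H]]; apply: gen_eq_sub; exists l, j; split => //; rewrite eq_sym.
Qed.

Lemma Rij_Ri l j p : j != l -> Rij E l j p -> Ri E l p.
Proof. by move=> jl H; apply: gen_eq_sub; exists j. Qed.

Lemma R0_Ri l p : R0 E p -> Ri E l p.
Proof.
move=> H; case: (third l l) => j [jl _].
by apply: (Rij_Ri jl); apply: R0_Rij.
Qed.

Lemma R0_Grel p : R0 E p -> Grel p.
Proof.
move=> H; case: (third 0%R 0%R) => j [j0 _].
by exists 0%R, j; split; [rewrite eq_sym|apply: R0_Rij].
Qed.

Lemma TR_Ri k l p : k != l -> typrel E (TR k) p -> Ri E l p.
Proof.
move=> kl [i [j [ik jk ij [H _]]]].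
have lk : l != k by rewrite eq_sym.
case: (uniq3 ik jk ij lk) => ?; subst l.
- by apply: (@Rij_Ri _ j) => //; rewrite eq_sym.
- exact: (Rij_Ri ij (Rij_C H)).
Qed.


Definition bc (L : option ttype) (t : ttype) : Prop :=
  match L with Some t0 => compat t0 t /\ compat t t0 | None => True end.

Fixpoint valid (p : T) (L : option ttype) (s : seq (ttype * T)) : Prop :=
  match s with
  | [::] => True
  | (t, y) :: s' => [/\ typrel E t (p, y), bc L t & valid y (Some t) s']
  end.

Definition lastp (p : T) (s : seq (ttype * T)) := last p (map snd s).
Definition lastt (L : option ttype) (s : seq (ttype * T)) :=
  last L (map (fun q => Some q.1) s).

Lemma lastp_cat p s1 s2 : lastp p (s1 ++ s2) = lastp (lastp p s1) s2.
Proof. by rewrite /lastp map_cat last_cat. Qed.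
Lemma lastt_cat L s1 s2 : lastt L (s1 ++ s2) = lastt (lastt L s1) s2.
Proof. by rewrite /lastt map_cat last_cat. Qed.

Lemma valid_cat p L s1 s2 :
  valid p L (s1 ++ s2) <-> valid p L s1 /\ valid (lastp p s1) (lastt L s1) s2.
Proof.
elim: s1 p L => [|[t y] s1 IH] p L /=; first by tauto.
rewrite /lastp /lastt /=; split.
- by case=> h1 h2 /IH [h3 h4].
- by case=> [[h1 h2 h3] h4]; split => //; apply/IH.
Qed.

Lemma valid_prev p L L' s : valid p L s ->
  (forall t y s', s = (t, y) :: s' -> bc L' t) -> valid p L' s.
Proof. by case: s => [|[t y] s] //= [h1 h2 h3] H; split => //; apply: H. Qed.

Definition isRl (l : 'I_3) (t : ttype) : bool :=
  match t with TR k => k != l | TE _ => false end.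
Definition isTR (t : ttype) : bool := if t is TR _ then true else false.

Lemma isTR_Rl l t : isTR t -> ~~ isRl l t -> t = TR l.
Proof. by case: t => // k _ /= /negPn /eqP ->. Qed.

Lemma comp_Ri l p L s : valid p L s -> all (fun q => isRl l q.1) s ->
  Ri E l (p, lastp p s).
Proof.
elim: s p L => [|[t y] s IH] p L /=; first by move=> _ _; apply: Ri_refl.
case=> h1 _ h3 /andP [h4 h5].
case: t h1 h3 h4 => // k h1 h3 h4.
apply: Ri_trans (TR_Ri h4 h1) _.
exact: IH h3 h5.
Qed.

Lemma pre_split l (s : seq (ttype * T)) : exists s1 s2, [/\ s = s1 ++ s2,
  all (fun q => isRl l q.1) s1 &
  forall t y s', s2 = (t, y) :: s' -> ~~ isRl l t].
Proof.
elim: s => [|[t y] s [s1 [s2 [-> h1 h2]]]]; first by exists [::], [::].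
case H: (isRl l t).
- by exists ((t, y) :: s1), s2; split => //=; rewrite H.
- by exists [::], ((t, y) :: s1 ++ s2); split => // t' y' s' [<- _ _]; rewrite H.
Qed.

Lemma suf_split l (s : seq (ttype * T)) : exists s1 s2, [/\ s = s1 ++ s2,
  all (fun q => isRl l q.1) s2 &
  s1 = [::] \/ exists s' t y, s1 = rcons s' (t, y) /\ ~~ isRl l t].
Proof.
elim/last_ind: s => [|s [t y] [s1 [s2 [-> h1 h2]]]]; first by exists [::], [::]; split => //; left.
case H: (isRl l t).
- exists s1, (rcons s2 (t, y)); split; first by rewrite rcons_cat.
  + by rewrite all_rcons H.
  + exact: h2.
- exists (rcons (s1 ++ s2) (t, y)), [::]; split; first by rewrite cats0.
  + by [].
  + by right; exists (s1 ++ s2), t, y; rewrite H.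
Qed.

Lemma lastt_rcons L s t y : lastt L (rcons s (t, y)) = Some t.
Proof. by rewrite /lastt map_rcons last_rcons. Qed.
Lemma lastp_rcons p s t y : lastp p (rcons s (t, y)) = y.
Proof. by rewrite /lastp map_rcons last_rcons. Qed.

Lemma bc_TE_TR l : bc (Some (TE l)) (TR l).
Proof. by split; [right|left]. Qed.
Lemma bc_TR_TE l : bc (Some (TR l)) (TE l).
Proof. by split; [left|right]. Qed.
Lemma bc_TE_TE l l' : l != l' -> bc (Some (TE l)) (TE l').
Proof. by move=> ll'; split; left; [exists l'|exists l]; split => //; rewrite eq_sym. Qed.
Lemma bc_TR_TR l l' : l != l' -> bc (Some (TR l)) (TR l').
Proof. by move=> ll'; split; right; [exists l'|exists l]; split => //; rewrite eq_sym. Qed.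

Definition TC u z := R0 E (u, z) \/ exists ch, [/\ valid u None ch,
  all (fun q => isTR q.1) ch & lastp u ch = z].

Lemma typrel_TR_ex i j x y : i != j -> Rij E i j (x, y) -> ~ R0 E (x, y) ->
  exists k, [/\ i != k, j != k & typrel E (TR k) (x, y)].
Proof.
move=> ij H n0; case: (third i j) => k [ki kj].
exists k; split; [by rewrite eq_sym|by rewrite eq_sym|].
by exists i, j; split => //; rewrite eq_sym.
Qed.

Lemma push n : forall ch u y z, size ch <= n -> valid u None ch ->
  all (fun q => isTR q.1) ch -> lastp u ch = y -> Grel (y, z) -> TC u z.
Proof.
elim: n => [|n IH] ch u y z.
- case: ch => // _ _ _ /= <- [i [j [ij Hij]]].
  have [H0|H0] := pselect (R0 E (u, z)); first by left.
  case: (typrel_TR_ex ij Hij H0) => k [_ _ Hk].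
  by right; exists [:: (TR k, z)].
case/lastP: ch => [|ch' [t y']] Hs Hv Ha Hl HG.
- case: Hl HG => <- [i [j [ij Hij]]].
  have [H0|H0] := pselect (R0 E (u, z)); first by left.
  case: (typrel_TR_ex ij Hij H0) => k [_ _ Hk].
  by right; exists [:: (TR k, z)].
move: Hv; rewrite -cats1 => /valid_cat [Hv' /= [Ht Hbc _]].
move: Ha; rewrite all_rcons /= => /andP [HtR Ha'].
rewrite lastp_rcons in Hl; subst y'.
have Hs' : size ch' <= n by move: Hs; rewrite size_rcons.
clear Hs.
case: t Ht Hbc HtR => // m Ht Hbc _.
set yp := lastp u ch' in Ht Hbc.
case: Ht => [i [j [im jm ij [Hij Hn0]]]].
case: HG => [i' [j' [ij' Hij']]].
have [same|diff] := pselect (R0 E (y, z) \/ (i' != m /\ j' != m)).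
- have Hyz : Rij E i j (y, z).
    case: same => [H0|[i'm j'm]]; first exact: R0_Rij.
    case: (uniq3 im jm ij i'm) => ?; case: (uniq3 im jm ij j'm) => ?; subst i' j' => //.
    + by move: ij'; rewrite eqxx.
    + exact: Rij_C.
    + by move: ij'; rewrite eqxx.
  have Hpz := Rij_trans Hij Hyz.
  have [H0|H0] := pselect (R0 E (yp, z)).
  + exact: (IH ch' u yp z Hs' Hv' Ha' erefl (R0_Grel H0)).
  + right; exists (rcons ch' (TR m, z)); split.
    * rewrite -cats1; apply/valid_cat; split => //=; split => //.
      by exists i, j; split.
    * by rewrite all_rcons Ha'.
    * by rewrite lastp_rcons.
- have H0 : ~ R0 E (y, z) by move=> H; apply: diff; left.
  case: (typrel_TR_ex ij' Hij' H0) => k [i'k j'k Hk].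
  have km : k != m.
    apply/negP => /eqP km; subst k; apply: diff; right; split => //.
  right; exists (rcons (rcons ch' (TR m, y)) (TR k, z)); split.
  + rewrite -cats1; apply/valid_cat; split.
    * rewrite -cats1; apply/valid_cat; split => //=; split => //.
      by exists i, j; split.
    * rewrite lastp_rcons lastt_rcons /=; split => //.
      by apply: bc_TR_TR; rewrite eq_sym.
  + by rewrite !all_rcons Ha'.
  + by rewrite lastp_rcons.
Qed.

Lemma Rall_TC u z : Rall E (u, z) -> TC u z.
Proof.
move=> H; have := gen_closR Grel_sym H.
elim => [|y z' _ IH HG]; first by left; apply: R0_refl.
case: IH => [H0|[ch [Hv Ha Hl]]].
- have [i [j [ij Hij]]] := HG.
  have Huz : Grel (u, z') by exists i, j; split => //; apply: Rij_trans (R0_Rij _ _ H0) Hij.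
  exact: (@push 0 [::] u u z' (leqnn 0) I isT erefl Huz).
- exact: (push (leqnn _) Hv Ha Hl HG).
Qed.

Lemma rsplit (Lo Ro : option 'I_3) u z : Rall E (u, z) ->
  (forall l l', Lo = Some l -> Ro = Some l' -> l != l' \/ ~ Ri E l (u, z)) ->
  (Lo = None -> Ro <> None) ->
  exists c1 mid c2, [/\ match Lo with None => c1 = u | Some l => Ri E l (u, c1) end,
    valid c1 (omap TE Lo) mid, lastp c1 mid = c2 &
    match Ro with None => c2 = z
    | Some l' => Ri E l' (c2, z) /\ bc (lastt (omap TE Lo) mid) (TE l') end].
Proof.
move=> HR Hcond HN.
case: (Rall_TC HR) => [H0|[ch [Hv Ha Hl]]].
- case: Lo Hcond HN => [l|] Hcond HN.
  + exists z, [::], z; split => //=; first exact: R0_Ri.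
    case: Ro Hcond {HN} => [l'|] Hcond //; split; first exact: Ri_refl.
    rewrite /lastt /=; apply: bc_TE_TE.
    case: (Hcond l l' erefl erefl) => // H; exfalso; apply: H; exact: R0_Ri.
  + case: Ro HN {Hcond} => [l'|] HN; last by case: (HN erefl).
    by exists u, [::], u; split => //; split => //; exact: R0_Ri.
have [c1 [ch2 [Hc1 Hv2 Ha2 Hl2 [Hempty Hhead]]]] : exists c1 ch2,
   [/\ match Lo with None => c1 = u | Some l => Ri E l (u, c1) end,
     valid c1 (omap TE Lo) ch2, all (fun q => isTR q.1) ch2, lastp c1 ch2 = z &
     (forall l, Lo = Some l -> ch2 = [::] -> Ri E l (u, z)) /\
     (forall l t y s', Lo = Some l -> ch2 = (t, y) :: s' -> t = TR l)].
  case: Lo Hcond HN => [l|] Hcond HN; last by exists u, ch; split.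
  case: (pre_split l ch) => ch1 [ch2 [Hch H1 H2]]; subst ch.
  move: Hv => /valid_cat [Hv1 Hv2].
  move: Ha; rewrite all_cat => /andP [_ Ha2].
  exists (lastp u ch1), ch2; split => //.
  + exact: comp_Ri Hv1 H1.
  + apply: valid_prev Hv2 _ => t y s' Hs; subst ch2; move: Ha2 => /= /andP [Ht _].
    by rewrite (isTR_Rl Ht (H2 _ _ _ erefl)); apply: bc_TE_TR.
  + by rewrite -lastp_cat.
  + split.
    * move=> l0 [<-] Hn; subst ch2; rewrite cats0 in Hl; rewrite -Hl; exact: comp_Ri Hv1 H1.
    * move=> l0 t y s' [<-] Hs; subst ch2; move: Ha2 => /= /andP [Ht _].
      exact: isTR_Rl Ht (H2 _ _ _ erefl).
case: Ro Hcond HN => [l'|] Hcond HN; last by exists c1, ch2, z; split.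
case: (suf_split l' ch2) => ch3 [ch4 [Hch H4 H3]]; subst ch2.
move: Hv2 => /valid_cat [Hv3 Hv4].
move: Ha2; rewrite all_cat => /andP [Ha3 Ha4].
exists c1, ch3, (lastp c1 ch3); split => //.
split; first by rewrite -Hl2 lastp_cat; exact: comp_Ri Hv4 H4.
case: H3 => [Hn|[s' [t [y [Hs Ht]]]]].
- subst ch3; rewrite /lastt /=.
  case: Lo Hc1 Hv3 Hempty Hhead Hcond {HN Hv4} => [l|] // _ _ Hempty Hhead Hcond.
  apply: bc_TE_TE.
  case: ch4 Hempty Hhead H4 {Ha4 Hl2} => [|[t y] s'] Hempty Hhead H4.
  + case: (Hcond l l' erefl erefl) => // H; exfalso; apply: H; exact: Hempty.
  + by rewrite (Hhead l t y s' erefl erefl) /= in H4; case/andP: H4.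
- subst ch3; rewrite lastt_rcons.
  move: Ha3; rewrite all_rcons => /andP [/= HtR _].
  rewrite (isTR_Rl HtR Ht); exact: bc_TR_TE.
Qed.

Lemma Eo_absL l a b c : Ri E l (a, b) -> Eo E l (b, c) -> Eo E l (a, c).
Proof.
move=> Hab [H1 H2]; split; first exact: Etrans (Ri_E Hab) H1.
by move=> H; apply: H2; apply: Ri_trans (Ri_sym Hab) H.
Qed.

Lemma Eo_absR l a b c : Eo E l (a, b) -> Ri E l (b, c) -> Eo E l (a, c).
Proof.
move=> [H1 H2] Hbc; split; first exact: Etrans H1 (Ri_E Hbc).
by move=> H; apply: H2; apply: Ri_trans H (Ri_sym Hbc).
Qed.

Section Machine.
Variable x0 : T.

Definition St w s l u z := [/\ valid x0 None s, lastp x0 s = w, Eo E l (w, u),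
  bc (lastt None s) (TE l) & Rall E (u, z)].

Lemma Init l z u : Rall E (x0, z) -> Eo E l (z, u) -> exists w s, St w s l u u.
Proof.
move=> HR He.
case: (@rsplit None (Some l) x0 z HR) => // c1 [mid [c2 [Hc1 Hv Hl [Hr Hbc]]]].
subst c1; exists c2, mid; split => //; first exact: Eo_absL Hr He.
exact: Rall_refl.
Qed.

Lemma StepR w s l u z z' : St w s l u z -> Rall E (z, z') -> St w s l u z'.
Proof. by case=> h1 h2 h3 h4 h5 H; split => //; apply: Rall_trans h5 H. Qed.

Lemma StepE w s l u z l' u' : St w s l u z -> Eo E l' (z, u') ->
  (l != l' \/ ~ Ri E l (u, z)) -> exists w' s', St w' s' l' u' u'.
Proof.
move=> [Hv Hw He Hb HR] He' Hc.
case: (@rsplit (Some l) (Some l') u z HR) => //; first by move=> a b [<-] [<-].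
move=> c1 [mid [c2 [Hc1 Hv' Hl [Hr Hbc]]]].
exists c2, (s ++ (TE l, c1) :: mid); split.
- apply/valid_cat; split => //; rewrite Hw /=; split => //.
  exact: Eo_absR He Hc1.
- by rewrite lastp_cat.
- exact: Eo_absL Hr He'.
- by rewrite lastt_cat.
- exact: Rall_refl.
Qed.

Lemma Final w s l u z : St w s l u z -> exists ch, [/\ valid x0 None ch, lastp x0 ch = z &
  exists ch1 ch2 l y, ch = ch1 ++ (TE l, y) :: ch2].
Proof.
move=> [Hv Hw He Hb HR].
case: (@rsplit (Some l) None u z HR) => // c1 [mid [c2 [Hc1 Hv' Hl Hz]]].
exists (s ++ (TE l, c1) :: mid); split.
- apply/valid_cat; split => //; rewrite Hw /=; split => //.
  exact: Eo_absR He Hc1.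
- by rewrite lastp_cat -Hz -Hl.
- by exists s, mid, l, c1.
Qed.

Fixpoint nfr (a : 'I_3) (y : T) (rs : seq T) (e : T) : Prop :=
  match rs with
  | [::] => Rall E (y, e)
  | u :: rest => exists zp, [/\ nfr a y rest zp, Eo E a (zp, u), Rall E (u, e) &
       (if rest is pu :: _ then ~ Ri E a (pu, zp) else True)]
  end.

Definition Before y a := Rall E (x0, y) \/ exists w s l u, St w s l u y /\ l != a.

Lemma block_run a y rs : forall e, nfr a y rs e -> Before y a ->
  forall u rest, rs = u :: rest -> exists w s, St w s a u e.
Proof.
elim: rs => [|u' rest IH] // e /= [zp [h1 h2 h3 h4]] HB u0 rest0 [<- _].
case: rest IH h1 h4 => [|pu rest'] IH h1 h4.
- case: HB => [Hx|[w [s [l [u1 [HSt Hl]]]]]].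
  + case: (Init (Rall_trans Hx h1) h2) => w [s HSt]; exists w, s; exact: StepR HSt h3.
  + have HSt' := StepR HSt h1.
    case: (StepE HSt' h2 (or_introl Hl)) => w' [s' HSt''].
    by exists w', s'; exact: StepR HSt'' h3.
- case: (IH zp h1 HB pu rest' erefl) => w [s HSt].
  case: (StepE HSt h2 (or_intror h4)) => w' [s' H'].
  by exists w', s'; exact: StepR H' h3.
Qed.

End Machine.

Lemma nfr_R a y rs e v : nfr a y rs e -> Rall E (e, v) -> nfr a y rs v.
Proof.
case: rs => [|u rest] /=; first exact: Rall_trans.
by case=> zp [h1 h2 h3 h4] H; exists zp; split => //; exact: Rall_trans h3 H.
Qed.

Lemma nfr_E a y rs e v : nfr a y rs e -> E a (e, v) -> ~ Rall E (e, v) ->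
  exists rs', nfr a y rs' v.
Proof.
case: rs => [|u rest] /= H Hev Hn.
- exists [:: v]; exists e; split => //; last exact: Rall_refl.
  by split => // /Ri_Rall.
- case: H => zp [h1 [h2a h2b] h3 h4].
  have [HR|HR] := pselect (Ri E a (u, e)).
  + have Hzv : E a (zp, v) := Etrans (Etrans h2a (Ri_E HR)) Hev.
    have [HRz|HRz] := pselect (Rall E (zp, v)).
    * by exists rest; exact: nfr_R h1 HRz.
    * exists (v :: rest); exists zp; split => //; last exact: Rall_refl.
      by split => // /Ri_Rall.
  + exists [:: v, u & rest]; exists e; split => //; last exact: Rall_refl.
    * by exists zp; split.
    * by split => // /Ri_Rall.
Qed.

Lemma join2_nfr a y y' : join2 (E a) (Rall E) (y, y') -> exists rs, nfr a y rs y'.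
Proof.
move=> H.
have : closR (E a `|` Rall E) y y'.
  apply: gen_closR H => p q [Hpq|Hpq]; [left; exact: Esym|right; exact: Rall_sym].
elim => [|y1 z _ [rs IH] HS]; first by exists [::]; apply: Rall_refl.
have [HR|HR] := pselect (Rall E (y1, z)); first by exists rs; exact: nfr_R IH HR.
case: HS => // HE'; exact: nfr_E IH HE' HR.
Qed.

Lemma valid_typrel p L ch d dt : valid p L ch -> forall k, k < size ch ->
  typrel E (nth dt (map fst ch) k) (nth d (p :: map snd ch) k, nth d (map snd ch) k).
Proof.
elim: ch p L => [|[t y] ch IH] p L //= [h1 h2 h3] [|k] //= Hk.
exact: IH h3 k Hk.
Qed.

Lemma valid_bc p L ch dt : valid p L ch -> forall k, k.+1 < size ch ->
  bc (Some (nth dt (map fst ch) k)) (nth dt (map fst ch) k.+1).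
Proof.
elim: ch p L => [|[t y] ch IH] p L //= [h1 h2 h3] [|k] Hk.
- by case: ch h3 {IH} Hk => [|[t' y'] ch] //= [_ h _].
- exact: IH h3 k Hk.
Qed.

Lemma proper_of l t' n tt : compat (TE l) t' -> has_type n tt (TE l) ->
  has_type n tt t' -> proper_I n tt.
Proof.
case => [[i [il ->]]|->] H1 H2.
- by right; exists l, i; split => //; rewrite eq_sym.
- by left; exists l.
Qed.

Lemma conclude x0 (N : set T) :
  (forall n x t, ~ N (x 0%N) -> tri_reduced E n x t -> proper_I n t -> x 0%N <> x n.-1) ->
  forall ch, valid x0 None ch -> (exists ch1 ch2 l y, ch = ch1 ++ (TE l, y) :: ch2) ->
  ~ N x0 -> x0 <> lastp x0 ch.
Proof.
move=> HN ch Hv [ch1 [ch2 [l [y Hch]]]] Hx0.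
pose x := fun k => nth x0 (x0 :: map snd ch) k.
pose t := fun k => nth (TE l) (map fst ch) k.
have Hlast : x (size ch) = lastp x0 ch.
  by have := nth_last x0 (x0 :: map snd ch); rewrite /= size_map.
have Hsz : size ch = size ch1 + (size ch2).+1 by rewrite Hch size_cat.
case Hs: (size ch) => [|[|m]].
- by rewrite Hsz addnS in Hs.
- move: Hs; rewrite Hsz addnS => -[] /eqP; rewrite addn_eq0 => /andP [/eqP/size0nil h1 /eqP/size0nil h2].
  subst ch1 ch2; subst ch; move: Hv => /= [[_ Hn] _ _].
  by rewrite /lastp /= => Heq; apply: Hn; rewrite -Heq; apply: Ri_refl.
rewrite -Hlast; apply: (HN (size ch).+1 x t) => //.
- split => //; first by rewrite Hs.
  + move=> k Hk; exact: valid_typrel Hv k Hk.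
  + by move=> k Hk; have := valid_bc (TE l) Hv Hk.
- have HTE : t (size ch1) = TE l by rewrite /t Hch map_cat nth_cat size_map ltnn subnn.
  case: ch2 Hch Hsz => [|[t' y'] ch2] Hch Hsz.
  + case/lastP: ch1 Hch Hsz HTE => [|c [t'' y'']] Hch Hsz HTE.
    * by rewrite Hsz in Hs.
    * have Hk : (size c).+1 < size ch by rewrite Hsz size_rcons /=; lia.
      have := valid_bc (TE l) Hv Hk.
      have Ht'' : nth (TE l) (map fst ch) (size c) = t''.
        by rewrite Hch map_cat nth_cat size_map size_rcons ltnSn map_rcons nth_rcons size_map ltnn eqxx.
      rewrite Ht''.
      have -> : nth (TE l) (map fst ch) (size c).+1 = TE l by move: HTE; rewrite /t size_rcons.
      case=> _ Hc; apply: (proper_of Hc).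
      * by exists (size c).+1; split; [rewrite Hsz size_rcons; lia|rewrite size_rcons in HTE].
      * by exists (size c); split => //; rewrite Hsz size_rcons; lia.
  + have Hk : (size ch1).+1 < size ch by rewrite Hsz /=; lia.
    have := valid_bc (TE l) Hv Hk.
    have -> : nth (TE l) (map fst ch) (size ch1).+1 = t'.
      by rewrite Hch map_cat nth_cat size_map ltnNge leqnSn /= subSnn.
    have Hn : nth (TE l) (map fst ch) (size ch1) = TE l := HTE.
    rewrite Hn; case=> Hc _; apply: (proper_of Hc).
    * by exists (size ch1); split => //; rewrite Hsz; lia.
    * exists (size ch1).+1; split; first by [].
      by rewrite /t Hch map_cat nth_cat size_map ltnNge leqnSn /= subSnn.
Qed.

Lemma I2_other (a b : 'I_2) : a != b -> b != ord0 -> a == ord0.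
Proof. by case: a => [[|[|?]] ?]; case: b => [[|[|?]] ?]. Qed.

Lemma part1 i (N : set T) :
  (forall n x t, ~ N (x 0%N) -> tri_reduced E n x t -> proper_I n t -> x 0%N <> x n.-1) ->
  forall n x, ~ N (x 0%N) ->
  reduced (fun a : 'I_2 => if a == ord0 then E i else Rall E) (Ri E i) n x -> x 0%N <> x n.-1.
Proof.
move=> HN n x Hx [Hn [a [Hstep Halt Hno H2]]].
case: (ltngtP n 2) => [Hlt|Hgt|Heq]; first by rewrite ltnNge Hn in Hlt.
2: by rewrite Heq; apply: H2.
have Hno' := Hno Hgt.
pose P k := exists rs, nfr i (x 0%N) rs (x k) /\
  (if a k.-1 == ord0 then exists rest, rs = x k :: rest
   else (rs = [::] -> k = 1%N) /\
     (forall u rest, rs = u :: rest -> u = x k.-1 /\ ~ Ri E i (x k.-1, x k))).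
have HP : forall k, k.+1 < n -> P k.+1.
  elim => [|k IH] Hk.
  - have Hs := Hstep 0%N Hk; rewrite /P /=.
    case Ha: (a 0%N == ord0); rewrite Ha in Hs.
    + exists [:: x 1%N]; split; last by exists [::].
      exists (x 0%N); split => //; [exact: Rall_refl| |exact: Rall_refl].
      by split => //; exact: Hno' 0%N Hk.
    + by exists [::]; split.
  - have Hk' : k.+1 < n by lia.
    case: (IH Hk') => rs [Hrs Hc].
    have Hs := Hstep k.+1 Hk.
    have Hd := Halt k Hk.
    rewrite /P /=.
    case Ha: (a k.+1 == ord0); rewrite Ha in Hs.
    + have Hak : (a k == ord0) = false.
        by apply/negbTE; move: Hd; rewrite (eqP Ha).
      rewrite /= Hak in Hc; case: Hc => Hc1 Hc2.
      exists (x k.+2 :: rs); split; last by exists rs.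
      exists (x k.+1); split => //.
      * by split => //; exact: Hno' k.+1 Hk.
      * exact: Rall_refl.
      * case: rs Hrs Hc1 Hc2 => [|pu r] // _ _ Hc2.
        by case: (Hc2 pu r erefl) => ->.
    + have Hak : a k == ord0 := I2_other Hd (negbT Ha).
      rewrite /= Hak in Hc; case: Hc => rest Hrs'.
      exists rs; split; first exact: nfr_R Hrs Hs.
      split; first by move=> Hr; subst rs.
      move=> u r Hr; subst rs; case: Hr => <- _; split => //; exact: Hno' k.+1 Hk.
have [m Hm] : exists m, n = m.+2 by exists n.-2; lia.
subst n.
case: (HP m (ltnSn _)) => rs [Hrs Hc].
have [u [rest Hur]] : exists u rest, rs = u :: rest.
  case: rs Hrs Hc => [|u rest] Hrs Hc; last by exists u, rest.
  exfalso; move: Hc; case: ifP => _; first by case.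
  by case=> H _; move: (H erefl) Hgt => [->].
case: (@block_run (x 0%N) i (x 0%N) rs (x m.+1) Hrs (or_introl (Rall_refl _)) u rest Hur)
  => w [s HSt].
case: (Final HSt) => ch [Hv Hl HTE].
by rewrite /= -Hl; exact: (@conclude (x 0%N) N HN ch Hv HTE Hx).
Qed.

Lemma part3 (N : set T) :
  (forall n x t, ~ N (x 0%N) -> tri_reduced E n x t -> proper_I n t -> x 0%N <> x n.-1) ->
  forall n x, ~ N (x 0%N) ->
  reduced (fun i : 'I_3 => join2 (E i) (Rall E)) (Rall E) n x -> x 0%N <> x n.-1.
Proof.
move=> HN n x Hx [Hn [a [Hstep Halt Hno H2]]].
case: (ltngtP n 2) => [Hlt|Hgt|Heq]; first by rewrite ltnNge Hn in Hlt.
2: by rewrite Heq; apply: H2.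
have Hno' := Hno Hgt.
pose Q k := exists w s u, St (x 0%N) w s (a k.-1) u (x k).
have HQ : forall k, k.+1 < n -> Q k.+1.
  move=> k Hk.
  have Hb : Before (x 0%N) (x k) (a k).
    case: k Hk => [|k] Hk; first by left; apply: Rall_refl.
    have Hk' : k.+1 < n by lia.
    have Hd := Halt k Hk.
    move: Hd => Hd.
    suff [w [s [u HSt]]] : Q k.+1 by right; exists w, s, (a k), u; split.
    move: Hk'; elim: k {Hk Hd} => [|k IH] Hk.
    + case: (join2_nfr (Hstep 0%N Hk)) => rs Hrs.
      case: rs Hrs => [|u rest] Hrs; first by exfalso; apply: (Hno' 0%N Hk).
      case: (@block_run (x 0%N) (a 0%N) (x 0%N) _ _ Hrs (or_introl (Rall_refl _)) u rest erefl)
        => w [s HSt].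
      by exists w, s, u.
    + have Hk' : k.+1 < n by lia.
      case: (IH Hk') => w [s [u HSt]].
      case: (join2_nfr (Hstep k.+1 Hk)) => rs Hrs.
      case: rs Hrs => [|u' rest] Hrs; first by exfalso; apply: (Hno' k.+1 Hk).
      have Hb : Before (x 0%N) (x k.+1) (a k.+1).
        by right; exists w, s, (a k), u; split => //; apply: Halt; lia.
      case: (@block_run (x 0%N) (a k.+1) (x k.+1) _ _ Hrs Hb u' rest erefl) => w' [s' HSt'].
      by exists w', s', u'.
  case: (join2_nfr (Hstep k Hk)) => rs Hrs.
  case: rs Hrs => [|u rest] Hrs; first by exfalso; apply: (Hno' k Hk).
  case: (@block_run (x 0%N) (a k) (x k) _ _ Hrs Hb u rest erefl) => w [s HSt].
  by exists w, s, u.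
have [m Hm] : exists m, n = m.+2 by exists n.-2; lia.
subst n.
case: (HQ m (ltnSn _)) => w [s [u HSt]].
case: (Final HSt) => ch [Hv Hl HTE].
by rewrite /= -Hl; exact: (@conclude (x 0%N) N HN ch Hv HTE Hx).
Qed.
End Comb.

Unset Implicit Arguments.

Theorem theorem4p3 (d : measure_display) (T : measurableType d) (R : realType)
  (mu : probability T R) (E : 'I_3 -> set (T * T)) :
  standard_borel T R -> nonatomic mu -> (forall i, SP1 mu (E i)) ->
  triangle_join mu E ->
  (forall i : 'I_3,
     free_amalg mu (fun a : 'I_2 => if a == ord0 then E i else Rall E) (Ri E i))
  /\ joinI E = joinI (fun i : 'I_3 => join2 (E i) (Rall E))
  /\ free_amalg mu (fun i : 'I_3 => join2 (E i) (Rall E)) (Rall E).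
Proof.
move=> _ _ HSP [[N [Nm N0 HN]] _].
have HE : forall i, Defs.equivalence_rel (E i) by move=> i; case: (HSP i).
split; [|split].
- move=> i; split.
  + move=> a; case: (a == ord0); [exact: Ri_E | exact: Ri_Rall].
  + exists N; split => // n x Hx Hred; exact: (part1 HE HN Hx Hred).
- apply/seteqP; split.
  + apply: gen_eq_min; first exact: gen_eq_equiv.
    move=> p [i Hp]; apply: gen_eq_sub; exists i; apply: gen_eq_sub; by left.
  + apply: gen_eq_min; first exact: gen_eq_equiv.
    move=> p [i Hp]; apply: (gen_eq_min (gen_eq_equiv _) _ Hp).
    move=> q [Hq|Hq]; first by apply: gen_eq_sub; exists i.
    apply: (gen_eq_min (gen_eq_equiv _) _ Hq).
    move=> r [j [k [_ [Hr _]]]]; apply: gen_eq_sub; by exists j.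
- split.
  + move=> i p H; apply: gen_eq_sub; by right.
  + exists N; split => // n x Hx Hred; exact: (part3 HE HN Hx Hred).
Qed.
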